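(* Let $\mathcal{T}$ be the set of integer triples $(A,B,C)$ with $A\le B\le C$, $A+B+C>0$, $\gcd(A,B,C)=1$ and $AB+BC+CA=q^2$ for some integer $q\ge 0$. Define $T:\mathcal{T}\to\mathbb{Z}^3$ by $T(A,B,C)=\mathrm{sort}(-A,\,B+2A,\,C+2A)$ if $A<0$, and $T(A,B,C)=\mathrm{sort}(A,\,B,\,A+B+C-2\sqrt{AB+BC+CA})$ if $A\ge 0$, where $\mathrm{sort}$ arranges the entries in non-decreasing order. Then $T$ maps $\mathcal{T}$ into $\mathcal{T}$, $T(0,0,1)=(0,0,1)$, and $A'+B'+C'<A+B+C$ for $(A',B',C')=T(A,B,C)$ whenever $(A,B,C)\ne(0,0,1)$. Consequently, for every $(A,B,C)\in\mathcal{T}$ some iterate $T^k(A,B,C)$ equals $(0,0,1)$. *)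

(* Defs.v *)
From Stdlib Require Import ZArith Lia.
Open Scope Z_scope.

Definition triple := (Z * Z * Z)%type.

Definition sort3 (a b c : Z) : triple :=
  let lo := Z.min a (Z.min b c) in
  let hi := Z.max a (Z.max b c) in
  (lo, a + b + c - lo - hi, hi).

Definition inT (t : triple) : Prop :=
  let '(A, B, C) := t in
  A <= B /\ B <= C /\ A + B + C > 0 /\ Z.gcd (Z.gcd A B) C = 1 /\
  exists q : Z, 0 <= q /\ A * B + B * C + C * A = q ^ 2.

(* the map T; on 𝒯, AB+BC+CA is a perfect square, so Z.sqrt is its exact
   nonnegative square root *)
Definition Tmap (t : triple) : triple :=
  let '(A, B, C) := t in
  if A <? 0 then sort3 (- A) (B + 2 * A) (C + 2 * A)
  else sort3 A B (A + B + C - 2 * Z.sqrt (A * B + B * C + C * A)).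

Definition tsum (t : triple) : Z := let '(A, B, C) := t in A + B + C.

(* Main.v *)
Require Import Defs.
From Stdlib Require Import ZArith Lia.
Open Scope Z_scope.

Lemma gcd3_of (x y z : Z) :
  (forall d, (d | x) -> (d | y) -> (d | z) -> (d | 1)) -> Z.gcd (Z.gcd x y) z = 1.
Proof.
  intro H. apply Z.divide_1_r_nonneg. apply Z.gcd_nonneg.
  apply H.
  - eapply Z.divide_trans; [apply Z.gcd_divide_l|apply Z.gcd_divide_l].
  - eapply Z.divide_trans; [apply Z.gcd_divide_l|apply Z.gcd_divide_r].
  - apply Z.gcd_divide_r.
Qed.

Lemma gcd3_to (x y z d : Z) :
  Z.gcd (Z.gcd x y) z = 1 -> (d | x) -> (d | y) -> (d | z) -> (d | 1).
Proof.
  intros H a b c. rewrite <- H. apply Z.gcd_greatest; auto. apply Z.gcd_greatest; auto.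
Qed.

Definition P (a b c : Z) : Prop :=
  a + b + c > 0 /\ Z.gcd (Z.gcd a b) c = 1 /\
  exists q : Z, 0 <= q /\ a * b + b * c + c * a = q ^ 2.

Lemma inT_of a b c : a <= b -> b <= c -> P a b c -> inT (a, b, c).
Proof. unfold P, inT. tauto. Qed.

Lemma P_perm1 a b c : P a b c -> P a c b.
Proof.
  intros [h1 [h2 [q [h3 h4]]]]. split; [lia|split].
  - apply gcd3_of. intros d x y z. apply (gcd3_to a b c d); auto.
  - exists q. split; auto. rewrite <- h4. ring.
Qed.

Lemma P_perm2 a b c : P a b c -> P b a c.
Proof.
  intros [h1 [h2 [q [h3 h4]]]]. split; [lia|split].
  - apply gcd3_of. intros d x y z. apply (gcd3_to a b c d); auto.
  - exists q. split; auto. rewrite <- h4. ring.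
Qed.

Lemma sort3_ok a b c : P a b c -> inT (sort3 a b c).
Proof.
  intro H. unfold sort3.
  assert (H1 := P_perm1 _ _ _ H). assert (H2 := P_perm2 _ _ _ H).
  assert (H3 := P_perm1 _ _ _ H2). assert (H4 := P_perm2 _ _ _ H1).
  assert (H5 := P_perm1 _ _ _ H4).
  destruct (Z.le_gt_cases a b); destruct (Z.le_gt_cases b c); destruct (Z.le_gt_cases a c).
  all: first
   [ replace (Z.min a (Z.min b c)) with a by lia; replace (Z.max a (Z.max b c)) with c by lia;
     replace (a+b+c-a-c) with b by lia; apply inT_of; auto; lia
   | replace (Z.min a (Z.min b c)) with a by lia; replace (Z.max a (Z.max b c)) with b by lia;
     replace (a+b+c-a-b) with c by lia; apply inT_of; auto; lia
   | replace (Z.min a (Z.min b c)) with b by lia; replace (Z.max a (Z.max b c)) with c by lia;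
     replace (a+b+c-b-c) with a by lia; apply inT_of; auto; lia
   | replace (Z.min a (Z.min b c)) with b by lia; replace (Z.max a (Z.max b c)) with a by lia;
     replace (a+b+c-b-a) with c by lia; apply inT_of; auto; lia
   | replace (Z.min a (Z.min b c)) with c by lia; replace (Z.max a (Z.max b c)) with b by lia;
     replace (a+b+c-c-b) with a by lia; apply inT_of; auto; lia
   | replace (Z.min a (Z.min b c)) with c by lia; replace (Z.max a (Z.max b c)) with a by lia;
     replace (a+b+c-c-a) with b by lia; apply inT_of; auto; lia ].
Qed.

Lemma tsum_sort3 a b c : tsum (sort3 a b c) = a + b + c.
Proof. unfold sort3, tsum. lia. Qed.

Lemma sqrt_sq q : 0 <= q -> Z.sqrt (q ^ 2) = q.
Proof. intro. replace (q ^ 2) with (q * q) by ring. now apply Z.sqrt_square. Qed.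



Lemma main_step A B C : inT (A, B, C) ->
  inT (Tmap (A, B, C)) /\ ((A, B, C) <> (0, 0, 1) -> tsum (Tmap (A, B, C)) < A + B + C).
Proof.
  intros (hab & hbc & hs & hg & q & hq & hQ). unfold Tmap.
  destruct (A <? 0) eqn:HA.
  - apply Z.ltb_lt in HA.
    assert (HB : 0 < B).
    { destruct (Z.le_gt_cases B 0); [|lia]. exfalso. nia. }
    split; [apply sort3_ok | intros; rewrite tsum_sort3; lia].
    split; [|split].
    + assert (q ^ 2 = A * (B + C) + B * C) by (rewrite <- hQ; ring).
      assert (0 <= A * (B + C) + B * C) by nia.
      assert (-A * (B + C) <= B * C) by lia.
      nia.
    + apply gcd3_of. intros d h1 h2 h3. apply (gcd3_to A B C d hg).
      * replace A with (- (-A)) by ring. now apply Z.divide_opp_r.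
      * replace B with ((B + 2*A) - 2 * (- - A)) by ring.
        apply Z.divide_sub_r; auto. apply Z.divide_mul_r. now apply Z.divide_opp_r.
      * replace C with ((C + 2*A) - 2 * (- - A)) by ring.
        apply Z.divide_sub_r; auto. apply Z.divide_mul_r. now apply Z.divide_opp_r.
    + exists q. split; auto. rewrite <- hQ. ring.
  - apply Z.ltb_ge in HA. rewrite hQ, sqrt_sq by auto.
    assert (hQ' : q ^ 2 = A * B + (A + B) * C) by (rewrite <- hQ; ring).
    split; [apply sort3_ok | intros Hne; rewrite tsum_sort3].
    + split; [|split].
      * assert (2 * q < 2 * A + 2 * B + C); [|lia].
        apply Z.square_lt_simpl_nonneg; [lia|].
        assert (4 * A * B <= (A + B) ^ 2) by nia.
        destruct (Z.eq_dec (A + B) 0); nia.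
      * apply gcd3_of. intros d h1 h2 h3.
        assert (hq2 : (d | q ^ 2)).
        { rewrite hQ'. apply Z.divide_add_r. apply Z.divide_mul_l; auto.
          apply Z.divide_mul_l. apply Z.divide_add_r; auto. }
        assert (hc : (d | C - 2 * q)).
        { replace (C - 2 * q) with ((A + B + C - 2 * q) - A - B) by ring.
          apply Z.divide_sub_r; auto. apply Z.divide_sub_r; auto. }
        assert (hcc : (d | C * C)).
        { replace (C * C) with ((C - 2 * q) * (C + 2 * q) + 4 * q ^ 2) by ring.
          apply Z.divide_add_r. apply Z.divide_mul_l; auto. apply Z.divide_mul_r; auto. }
        assert (hg' : Z.gcd d C = 1).
        { apply Z.divide_1_r_nonneg. apply Z.gcd_nonneg.
          apply (gcd3_to A B C); auto.
          - eapply Z.divide_trans; [apply Z.gcd_divide_l|auto].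
          - eapply Z.divide_trans; [apply Z.gcd_divide_l|auto].
          - apply Z.gcd_divide_r. }
        assert (hdC : (d | C)) by (eapply Z.gauss; eauto).
        apply (gcd3_to A B C); auto.
      * exists (Z.abs (q - (A + B))). split; [lia|].
        assert (Habs : Z.abs (q - (A + B)) ^ 2 = (q - (A + B)) ^ 2).
        { destruct (Z.abs_spec (q - (A + B))) as [[_ ->]|[_ ->]]; ring. }
        rewrite Habs.
        assert (A * B + B * (A + B + C - 2 * q) + (A + B + C - 2 * q) * A - (q - (A + B)) ^ 2
                = A * B + (A + B) * C - q ^ 2) by ring. lia.
    + assert (A + B < 2 * q); [|lia].
      apply Z.square_lt_simpl_nonneg; [lia|].
      destruct (Z.eq_dec A 0); destruct (Z.eq_dec B 0).
      * exfalso. subst. apply Hne. rewrite Z.gcd_0_l in hg.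
        assert (C = 1) by lia. now subst.
      * nia.
      * nia.
      * nia.
Qed.

Theorem mainTheorem7 :
  (forall t : triple, inT t -> inT (Tmap t)) /\
  Tmap (0, 0, 1) = (0, 0, 1) /\
  (forall t : triple, inT t -> t <> (0, 0, 1) -> tsum (Tmap t) < tsum t) /\
  (forall t : triple, inT t -> exists k : nat, Nat.iter k Tmap t = (0, 0, 1)).
Proof.
  split; [|split; [|split]].
  - intros [[A B] C] H. apply (main_step A B C H).
  - reflexivity.
  - intros [[A B] C] H. apply (main_step A B C H).
  - assert (forall n : nat, forall t, inT t -> (Z.to_nat (tsum t) <= n)%nat ->
              exists k : nat, Nat.iter k Tmap t = (0, 0, 1)%Z).
    { induction n as [|n IH]; intros [[A B] C] H Hn.
      - exfalso. destruct H as (_ & _ & hs & _). simpl in Hn. lia.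
      - destruct (main_step A B C H) as [H1 H2].
        assert (Hd : {(A, B, C) = (0, 0, 1)} + {(A, B, C) <> (0, 0, 1)}) by (repeat decide equality; apply Z.eq_dec).
        destruct Hd as [e|ne].
        + exists 0%nat. exact e.
        + specialize (H2 ne). destruct (IH _ H1) as [k Hk].
          * destruct (Tmap (A, B, C)) as [[a b] c] eqn:E.
            destruct H1 as (_ & _ & hs' & _). simpl in *. lia.
          * exists (S k). now rewrite Nat.iter_succ_r. }
    intros t Ht. exact (H _ t Ht (le_n _)).
Qed.
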